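(* For $|q|<1$, $$1+\sum_{n=1}^\infty\frac{q^{(2n-1)^2}(-q;q^2)_{2n-1}\left(-1+q^{4n-1}+q^{8n}+q^{8n-2}\right)}{(q^4;q^4)_{2n}}=\frac{(q;q)_\infty}{(q^4;q^4)_\infty}.$$
   Context: $(a;q)_n=\prod_{k=0}^{n-1}(1-aq^k)$, $(a;q)_\infty=\prod_{k\ge0}(1-aq^k)$. *)

(* Defs.v *)
From Stdlib Require Import Reals.
Open Scope R_scope.

Definition Cpx : Type := (R * R)%type.
Definition RtoC (x : R) : Cpx := (x, 0).
Definition Cadd (z w : Cpx) : Cpx := (fst z + fst w, snd z + snd w).
Definition Copp (z : Cpx) : Cpx := (- fst z, - snd z).
Definition Csub (z w : Cpx) : Cpx := Cadd z (Copp w).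
Definition Cmul (z w : Cpx) : Cpx :=
  (fst z * fst w - snd z * snd w, fst z * snd w + snd z * fst w).
Definition Cinv (z : Cpx) : Cpx :=
  (fst z / (fst z ^ 2 + snd z ^ 2), - snd z / (fst z ^ 2 + snd z ^ 2)).
Definition Cdiv (z w : Cpx) : Cpx := Cmul z (Cinv w).
Definition Cnorm (z : Cpx) : R := sqrt (fst z ^ 2 + snd z ^ 2).
Definition C0 : Cpx := RtoC 0.
Definition C1 : Cpx := RtoC 1.
Fixpoint Cpow (z : Cpx) (n : nat) : Cpx :=
  match n with O => C1 | S m => Cmul z (Cpow z m) end.

Definition Ccv (u : nat -> Cpx) (l : Cpx) : Prop :=
  forall eps : R, eps > 0 -> exists N : nat, forall n : nat, (n >= N)%nat ->
    Cnorm (Csub (u n) l) < eps.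

Fixpoint qpoch (a q : Cpx) (n : nat) : Cpx :=
  match n with
  | O => C1
  | S m => Cmul (qpoch a q m) (Csub C1 (Cmul a (Cpow q m)))
  end.

Definition qpoch_inf (a q : Cpx) (P : Cpx) : Prop := Ccv (fun n => qpoch a q n) P.

Definition term8 (q : Cpx) (n : nat) : Cpx :=
  Cdiv
    (Cmul (Cmul (Cpow q ((2 * n - 1) ^ 2)) (qpoch (Copp q) (Cpow q 2) (2 * n - 1)))
       (Cadd (Cadd (Cadd (Copp C1) (Cpow q (4 * n - 1))) (Cpow q (8 * n)))
             (Cpow q (8 * n - 2))))
    (qpoch (Cpow q 4) (Cpow q 4) (2 * n)).

Fixpoint psum8 (q : Cpx) (N : nat) : Cpx :=
  match N with
  | O => C1
  | S M => Cadd (psum8 q M) (term8 q (S M))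
  end.

(* Main.v *)
From Stdlib Require Import Reals Lra Lia Ring Field.
From Coquelicot Require Import Coquelicot.
Require Import Defs.
Open Scope R_scope.

Lemma Ccv_iff (u : nat -> C) l : Ccv u l <-> (forall eps, eps > 0 -> exists N, forall n, (n >= N)%nat -> Cmod (u n - l)%C < eps).
Proof. reflexivity. Qed.

Lemma Cmod_sub_sym (a b : C) : Cmod (a - b)%C = Cmod (b - a)%C.
Proof. replace (b - a)%C with (- (a - b))%C by ring. now rewrite Cmod_opp. Qed.

Lemma Ccv_ext_ev (u v : nat -> C) (l : C) : (exists N0, forall n, (n >= N0)%nat -> u n = v n) -> Ccv u l -> Ccv v l.
Proof.
  intros [N0 H] Hu. rewrite Ccv_iff in *. intros eps He. destruct (Hu eps He) as [N HN].
  exists (max N N0). intros n Hn. rewrite <- H by lia. apply HN; lia.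
Qed.

Lemma Ccv_const (c : C) : Ccv (fun _ => c) c.
Proof. rewrite Ccv_iff. intros eps He. exists O. intros n _. replace (c - c)%C with (0:C) by ring. rewrite Cmod_0. lra. Qed.

Lemma Ccv_plus (u v : nat -> C) (l m : C) : Ccv u l -> Ccv v m -> Ccv (fun n => u n + v n)%C (l + m)%C.
Proof.
  rewrite !Ccv_iff. intros Hu Hv eps He.
  destruct (Hu (eps/2)) as [N1 H1]; [lra|]. destruct (Hv (eps/2)) as [N2 H2]; [lra|].
  exists (max N1 N2). intros n Hn.
  replace (u n + v n - (l + m))%C with ((u n - l) + (v n - m))%C by ring.
  eapply Rle_lt_trans; [apply Cmod_triangle|].
  specialize (H1 n ltac:(lia)). specialize (H2 n ltac:(lia)). lra.
Qed.

Lemma Ccv_mult (u v : nat -> C) (l m : C) : Ccv u l -> Ccv v m -> Ccv (fun n => u n * v n)%C (l * m)%C.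
Proof.
  rewrite !Ccv_iff. intros Hu Hv eps He.
  assert (Hl := Cmod_ge_0 l). assert (Hm := Cmod_ge_0 m).
  destruct (Hv 1) as [N1 H1]; [lra|].
  destruct (Hu (eps/(2*(Cmod m + 1)))) as [N2 H2].
  { apply Rlt_gt, Rdiv_lt_0_compat; lra. }
  destruct (Hv (eps/(2*(Cmod l + 1)))) as [N3 H3].
  { apply Rlt_gt, Rdiv_lt_0_compat; lra. }
  exists (max N1 (max N2 N3)). intros n Hn.
  specialize (H1 n ltac:(lia)). specialize (H2 n ltac:(lia)). specialize (H3 n ltac:(lia)).
  replace (u n * v n - l * m)%C with ((u n - l) * v n + l * (v n - m))%C by ring.
  eapply Rle_lt_trans; [apply Cmod_triangle|]. rewrite !Cmod_mult.
  assert (Hvn : Cmod (v n) <= Cmod m + 1).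
  { replace (v n) with ((v n - m) + m)%C by ring. eapply Rle_trans; [apply Cmod_triangle|]. lra. }
  assert (A1 : Cmod (u n - l) * Cmod (v n) <= eps/(2*(Cmod m+1)) * (Cmod m + 1)).
  { apply Rmult_le_compat; try apply Cmod_ge_0; lra. }
  assert (A2 : Cmod l * Cmod (v n - m) <= (Cmod l + 1) * (eps/(2*(Cmod l+1)))).
  { apply Rmult_le_compat; try apply Cmod_ge_0; lra. }
  assert (E1 : eps/(2*(Cmod m+1)) * (Cmod m + 1) = eps/2) by (field; lra).
  assert (E2 : (Cmod l + 1) * (eps/(2*(Cmod l+1))) = eps/2) by (field; lra).
  assert (A3 : Cmod l * Cmod (v n - m) < (Cmod l + 1) * (eps/(2*(Cmod l+1)))).
  { destruct (Req_dec (Cmod l) 0) as [Z|Z].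
    - rewrite Z, Rmult_0_l. apply Rmult_lt_0_compat; [lra|]. apply Rdiv_lt_0_compat; lra.
    - apply Rle_lt_trans with (Cmod l * (eps/(2*(Cmod l+1)))).
      + apply Rmult_le_compat_l; lra.
      + apply Rmult_lt_compat_r; [apply Rdiv_lt_0_compat|]; lra. }
  lra.
Qed.

Lemma Ccv_unique (u : nat -> C) (l m : C) : Ccv u l -> Ccv u m -> l = m.
Proof.
  rewrite !Ccv_iff. intros Hl Hm.
  destruct (Req_dec (Cmod (l - m)%C) 0) as [Z|Z].
  { apply Cmod_eq_0 in Z. replace l with ((l - m) + m)%C by ring. rewrite Z. ring. }
  assert (P := Cmod_ge_0 (l - m)).
  destruct (Hl (Cmod (l-m)%C/2)) as [N1 H1]; [lra|]. destruct (Hm (Cmod (l-m)%C/2)) as [N2 H2]; [lra|].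
  specialize (H1 (max N1 N2) ltac:(lia)). specialize (H2 (max N1 N2) ltac:(lia)).
  exfalso. assert (T := Cmod_triangle (l - u (max N1 N2)) (u (max N1 N2) - m)).
  replace (l - u (max N1 N2) + (u (max N1 N2) - m))%C with (l - m)%C in T by ring.
  rewrite (Cmod_sub_sym l (u (max N1 N2))) in T. lra.
Qed.

Lemma Ccv_subseq (u : nat -> C) (l : C) (phi : nat -> nat) : (forall n, (phi n >= n)%nat) -> Ccv u l -> Ccv (fun n => u (phi n)) l.
Proof.
  rewrite !Ccv_iff. intros Hp H eps He. destruct (H eps He) as [N HN]. exists N. intros n Hn. apply HN. specialize (Hp n). lia.
Qed.

Lemma Ccv_unshift (u : nat -> C) (l : C) : Ccv (fun n => u (S n)) l -> Ccv u l.
Proof.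
  rewrite !Ccv_iff. intros H eps He. destruct (H eps He) as [N HN]. exists (S N). intros n Hn.
  destruct n as [|n]; [lia|]. apply HN; lia.
Qed.

Lemma Ccv_le (u : nat -> C) (l c : C) (B : R) : Ccv u l -> (exists N0, forall n, (n >= N0)%nat -> Cmod (u n - c)%C <= B) -> Cmod (l - c)%C <= B.
Proof.
  rewrite Ccv_iff. intros H [N0 HB]. apply Rnot_lt_le. intro Hlt.
  destruct (H (Cmod (l - c) - B)) as [N HN]; [lra|].
  specialize (HN (max N N0) ltac:(lia)). specialize (HB (max N N0) ltac:(lia)).
  assert (T := Cmod_triangle (l - u (max N N0)) (u (max N N0) - c)).
  replace (l - u (max N N0) + (u (max N N0) - c))%C with (l - c)%C in T by ring.
  rewrite (Cmod_sub_sym l (u (max N N0))) in T. lra.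
Qed.

Lemma Ccv_dom0 (u : nat -> C) (w : nat -> R) : (forall n, Cmod (u n) <= w n) -> is_lim_seq w 0 -> Ccv u (0:C).
Proof.
  intros Hb Hw. apply is_lim_seq_Reals in Hw. rewrite Ccv_iff. intros eps He.
  destruct (Hw eps He) as [N HN]. exists N. intros n Hn. specialize (HN n Hn). specialize (Hb n).
  unfold R_dist in HN. replace (u n - 0)%C with (u n) by ring.
  assert (w n < eps) by (apply Rabs_def2 in HN; lra). lra.
Qed.

Lemma Ccv_of_is_series (a : nat -> C) l : is_series a l -> Ccv (fun n => sum_n a n) l.
Proof.
  intros H. unfold is_series in H. pose proof (proj1 (filterlim_locally_ball_norm _ _) H) as H'.
  rewrite Ccv_iff. intros eps He. destruct (H' (mkposreal eps He)) as [N HN]. exists N. intros n Hn.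
  specialize (HN n Hn). unfold ball_norm in HN. exact HN.
Qed.

Lemma Ccv_domC (u v : nat -> C) (M : R) : 0 <= M -> (forall n, Cmod (u n) <= M * Cmod (v n)) -> Ccv v (0:C) -> Ccv u (0:C).
Proof.
  rewrite !Ccv_iff. intros HM Hb Hv eps He.
  destruct (Hv (eps / (M + 1))) as [N HN]. { apply Rlt_gt, Rdiv_lt_0_compat; lra. }
  exists N. intros n Hn. specialize (HN n Hn). specialize (Hb n).
  replace (v n - 0)%C with (v n) in HN by ring. replace (u n - 0)%C with (u n) by ring.
  assert (M * Cmod (v n) <= M * (eps / (M+1))) by (apply Rmult_le_compat_l; lra).
  assert (M * (eps / (M+1)) < eps).
  { apply Rlt_le_trans with ((M+1) * (eps / (M+1))). apply Rmult_lt_compat_r. apply Rdiv_lt_0_compat; lra. lra.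
    right. field. lra. }
  lra.
Qed.

Lemma Ccv_scal (u : nat -> C) (c l : C) : Ccv u l -> Ccv (fun n => c * u n)%C (c * l)%C.
Proof. intro H. apply (Ccv_mult (fun _ => c) u). apply Ccv_const. exact H. Qed.

Lemma sum_n_telescope (P : nat -> C) n : sum_n (fun k => P (S k) - P k)%C n = (P (S n) - P O)%C.
Proof.
  induction n. - rewrite sum_O. reflexivity.
  - rewrite sum_Sn, IHn. change (@eq C (Cplus (P (S n) - P O) (P (S (S n)) - P (S n)))%C (P (S (S n)) - P O)%C). ring.
Qed.

Lemma ProdConv (P e : nat -> C) (K r : R) : 0 <= K -> 0 <= r < 1 ->
  (forall k, Cmod (e k) <= K * r^k) -> (forall k, P (S k) = P k * (1 + e k))%C -> exists L, Ccv P L.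
Proof.
  intros HK Hr He HP.
  assert (Hb : forall k, Cmod (P k) <= Cmod (P O) * exp (K * (1 - r^k)/(1-r))).
  { induction k.
    - simpl. replace (K * (1 - 1) / (1 - r)) with 0 by (field; lra). rewrite exp_0. lra.
    - rewrite HP, Cmod_mult.
      assert (H1 : Cmod (1 + e k)%C <= 1 + K * r^k).
      { eapply Rle_trans; [apply Cmod_triangle|]. rewrite Cmod_1. specialize (He k). lra. }
      assert (H2 : 1 + K * r^k <= exp (K * r^k)) by apply exp_ineq1_le.
      replace (K * (1 - r ^ S k) / (1 - r)) with (K * (1 - r^k)/(1-r) + K * r^k) by (simpl; field; lra).
      rewrite exp_plus.
      apply Rle_trans with (Cmod (P O) * exp (K * (1 - r ^ k) / (1 - r)) * (1 + K * r^k)).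
      + apply Rmult_le_compat; try apply Cmod_ge_0; lra.
      + rewrite !Rmult_assoc. apply Rmult_le_compat_l; [apply Cmod_ge_0|].
        apply Rmult_le_compat_l; [left; apply exp_pos| lra]. }
  set (M := Cmod (P O) * exp (K / (1 - r))).
  assert (HM : forall k, Cmod (P k) <= M).
  { intro k. eapply Rle_trans; [apply Hb|]. unfold M. apply Rmult_le_compat_l; [apply Cmod_ge_0|].
    assert (0 <= r^k) by (apply pow_le; lra).
    assert (L : K * (1 - r ^ k) / (1 - r) <= K / (1 - r)).
    { unfold Rdiv. apply Rmult_le_compat_r. { left; apply Rinv_0_lt_compat; lra. }
      nra. }
    destruct (Rle_lt_or_eq_dec _ _ L) as [L1|L1]; [left; now apply exp_increasing | rewrite L1; lra]. }
  set (d := fun k => (P (S k) - P k)%C).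
  assert (Hd : forall k, Cmod (d k) <= (M*K) * r^k).
  { intro k. unfold d. rewrite HP. replace (P k * (1 + e k) - P k)%C with (P k * e k)%C by ring.
    rewrite Cmod_mult. rewrite Rmult_assoc.
    apply Rmult_le_compat; [apply Cmod_ge_0|apply Cmod_ge_0|apply HM|apply He]. }
  assert (Hex : ex_series d).
  { apply (ex_series_le d (fun k => (M*K) * r^k)).
    - intro k. apply Hd.
    - apply (ex_series_scal_l (M*K) (fun k => r^k)). apply ex_series_geom. rewrite Rabs_pos_eq; lra. }
  destruct Hex as [l Hl]. exists (P O + l)%C.
  apply Ccv_unshift. apply Ccv_of_is_series in Hl.
  apply (Ccv_ext_ev (fun n => P O + sum_n d n)%C).
  { exists O. intros n _. unfold d. rewrite sum_n_telescope. ring. }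
  apply Ccv_plus; [apply Ccv_const | exact Hl].
Qed.

Lemma Cmod_lb_sub (w : C) (s : R) : Cmod w <= s -> 1 - s <= Cmod (1 - w)%C.
Proof.
  intro H. assert (T := Cmod_triangle (1 - w)%C w). replace (1 - w + w)%C with (1:C) in T by ring.
  rewrite Cmod_1 in T. lra.
Qed.
Lemma Cmod_lb_add (w : C) (s : R) : Cmod w <= s -> 1 - s <= Cmod (1 + w)%C.
Proof.
  intro H. replace (1 + w)%C with (1 - (- w))%C by ring. apply Cmod_lb_sub. now rewrite Cmod_opp.
Qed.
Lemma nz_of_pos (w : C) : 0 < Cmod w -> w <> (0:C).
Proof. intros H E. rewrite E, Cmod_0 in H. lra. Qed.
Lemma nz_sub (w : C) : Cmod w < 1 -> (1 - w)%C <> (0:C).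
Proof. intro H. apply nz_of_pos. assert (X := Cmod_lb_sub w (Cmod w) (Rle_refl _)). lra. Qed.
Lemma nz_add (w : C) : Cmod w < 1 -> (1 + w)%C <> (0:C).
Proof. intro H. apply nz_of_pos. assert (X := Cmod_lb_add w (Cmod w) (Rle_refl _)). lra. Qed.

Lemma div_bound (a A b c B : R) : 0 <= a <= A -> 0 < B <= b -> B <= c -> a / (b * c) <= A / (B * B).
Proof.
  intros Ha Hb Hc. unfold Rdiv. apply Rmult_le_compat; try lra.
  - left. apply Rinv_0_lt_compat. apply Rmult_lt_0_compat; lra.
  - apply Rinv_le_contravar. apply Rmult_lt_0_compat; lra. apply Rmult_le_compat; lra.
Qed.

Definition rho (q z : C) (m : nat) : C :=
  (- (1 + q * (q^2)^m) * (q^2)^m * z / ((1 - q^2 * (q^2)^m) * (1 + q * z * (q^2)^m)))%C.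
Fixpoint tt (q z : C) (m : nat) : C := match m with O => (1:C) | S m => (tt q z m * rho q z m)%C end.
Fixpoint SS (q z : C) (N : nat) : C := match N with O => (0:C) | S N => (SS q z N + tt q z N)%C end.

Section Core.
Variable q : C.
Hypothesis hq : Cmod q < 1.
Let r := Cmod q.
Let s := (1 + r) / 2.
Lemma r_ge0 : 0 <= r. Proof. apply Cmod_ge_0. Qed.
Lemma s_facts : r <= s /\ 0 < s /\ s < 1.
Proof. assert (H := r_ge0). unfold s. fold r in hq. lra. Qed.
Let Kc := (1 + s) / ((1 - s^2) * (1 - s^2)).

Lemma powle1 (x : R) n : 0 <= x <= 1 -> 0 <= x ^ n <= 1.
Proof. intro H. induction n; simpl; nra. Qed.

Lemma CmodX m : Cmod ((q^2)^m)%C = (r^2)^m.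
Proof. rewrite !Cmod_pow. reflexivity. Qed.

Lemma X_bound m : Cmod ((q^2)^m)%C <= (s^2)^m /\ (s^2)^m <= 1.
Proof.
  rewrite CmodX. destruct s_facts as [A [B C]]. assert (H := r_ge0).
  split. - apply pow_incr. split. apply pow_le; lra. apply pow_incr; lra.
  - apply powle1. split. apply pow_le; lra. replace 1 with (1^2) by ring. apply pow_incr; lra.
Qed.

Lemma rho_bound z m : Cmod z <= r -> Cmod (rho q z m) <= Kc * (s^2)^m * Cmod z.
Proof.
  intro Hz. destruct s_facts as [A [B C]]. assert (H0 := r_ge0).
  destruct (X_bound m) as [HX HX1]. assert (HXp := Cmod_ge_0 ((q^2)^m)%C).
  assert (Hs2 : 0 <= s^2 <= 1) by (split; nra).
  assert (Hqq : Cmod (q^2)%C <= s^2) by (rewrite Cmod_pow; apply pow_incr; fold r; lra).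
  assert (Hz' := Cmod_ge_0 z).
  assert (D1 : 1 - s^2 <= Cmod (1 - q^2 * (q^2)^m)%C).
  { apply Cmod_lb_sub. rewrite Cmod_mult. apply Rle_trans with (s^2 * 1).
    apply Rmult_le_compat; try apply Cmod_ge_0; lra. lra. }
  assert (D2 : 1 - s^2 <= Cmod (1 + q * z * (q^2)^m)%C).
  { apply Cmod_lb_add. rewrite !Cmod_mult. fold r. apply Rle_trans with (s * s * 1).
    apply Rmult_le_compat.
    - apply Rmult_le_pos; lra.
    - lra.
    - apply Rmult_le_compat; lra.
    - lra.
    - lra. }
  assert (N1 : Cmod (1 + q * (q^2)^m)%C <= 1 + s).
  { eapply Rle_trans; [apply Cmod_triangle|]. rewrite Cmod_1, Cmod_mult. fold r.
    assert (r * Cmod ((q^2)^m)%C <= s * 1) by (apply Rmult_le_compat; lra). lra. }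
  assert (Hs1 : 0 < 1 - s^2) by nra.
  unfold rho. rewrite Cmod_div.
  2:{ apply Cmult_neq_0; apply nz_of_pos; lra. }
  rewrite !Cmod_mult, Cmod_opp.
  replace (Kc * (s^2)^m * Cmod z) with ((1 + s) * (s^2)^m * Cmod z / ((1 - s^2) * (1 - s^2))) by (unfold Kc; field; lra).
  apply div_bound; try lra.
  split. repeat apply Rmult_le_pos; apply Cmod_ge_0.
  apply Rmult_le_compat; try apply Cmod_ge_0; try lra.
  apply Rmult_le_pos; apply Cmod_ge_0.
  apply Rmult_le_compat; try apply Cmod_ge_0; lra.
Qed.


Lemma Kc_pos : 0 < Kc.
Proof. destruct s_facts as [A [B C]]. unfold Kc. apply Rdiv_lt_0_compat. lra. apply Rmult_lt_0_compat; nra. Qed.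

Fixpoint gg (m : nat) : R := match m with O => Kc | S m => gg m * (Kc * (s^2)^(S m) * s) end.

Lemma gg_pos m : 0 < gg m.
Proof.
  destruct s_facts as [A [B C]]. assert (K := Kc_pos).
  induction m; [exact K|]. cbn [gg]. apply Rmult_lt_0_compat; [exact IHm|].
  apply Rmult_lt_0_compat; [|exact B]. apply Rmult_lt_0_compat; [exact K|]. apply pow_lt. nra.
Qed.

Lemma tt_bound z m : Cmod z <= r -> Cmod (tt q z (S m)) <= Cmod z * gg m.
Proof.
  intro Hz. destruct s_facts as [A [B C]]. assert (Hz0 := Cmod_ge_0 z).
  induction m.
  - simpl. rewrite Cmod_mult, Cmod_1, Rmult_1_l. eapply Rle_trans; [apply rho_bound; exact Hz|]. simpl. lra.
  - change (tt q z (S (S m))) with (tt q z (S m) * rho q z (S m))%C. rewrite Cmod_mult.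
    eapply Rle_trans.
    { apply Rmult_le_compat; try apply Cmod_ge_0. exact IHm. apply rho_bound; exact Hz. }
    change (gg (S m)) with (gg m * (Kc * (s^2)^(S m) * s)).
    assert (0 <= Kc * (s^2)^(S m)) by (apply Rmult_le_pos; [left; apply Kc_pos| apply pow_le; nra]).
    assert (0 <= gg m) by (left; apply gg_pos).
    assert (Cmod z * gg m * (Kc * (s ^ 2) ^ S m * Cmod z) <= Cmod z * gg m * (Kc * (s ^ 2) ^ S m * s)).
    { apply Rmult_le_compat_l. apply Rmult_le_pos; lra. apply Rmult_le_compat_l; lra. }
    lra.
Qed.

Lemma gg_series : ex_series gg.
Proof.
  destruct s_facts as [A [B C]].
  apply (ex_series_ext (fun n => Rabs (gg n))). { intro n. apply Rabs_pos_eq. left; apply gg_pos. }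
  apply (ex_series_DAlembert gg 0). lra. { intro n. apply Rgt_not_eq, gg_pos. }
  apply (is_lim_seq_ext (fun n => (Kc * s^2 * s) * (s^2)^n)).
  { intro n. cbn [gg]. rewrite Rabs_pos_eq.
    - assert (gg n <> 0) by (apply Rgt_not_eq, gg_pos). change ((s^2)^(S n)) with (s^2 * (s^2)^n). field. auto.
    - apply Rmult_le_pos. left. apply Rmult_lt_0_compat. apply gg_pos.
      apply Rmult_lt_0_compat; [|exact B]. apply Rmult_lt_0_compat; [apply Kc_pos| apply pow_lt; nra].
      left. apply Rinv_0_lt_compat, gg_pos. }
  replace (Finite 0) with (Rbar_mult (Kc * s^2 * s) 0) by (simpl; f_equal; ring).
  apply is_lim_seq_scal_l. apply is_lim_seq_geom. rewrite Rabs_pos_eq; nra.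
Qed.

Let G := Series gg.

Lemma gg_partial n : sum_n gg n <= G.
Proof.
  apply (is_lim_seq_incr_compare (sum_n gg)). apply Series_correct, gg_series.
  intro k. rewrite sum_Sn. change (plus (sum_n gg k) (gg (S k))) with (sum_n gg k + gg (S k)).
  assert (H := gg_pos (S k)). lra.
Qed.

Lemma SS_sum z n : SS q z (S n) = sum_n (tt q z) n.
Proof.
  induction n.
  - rewrite sum_O. simpl. change (@eq C (0 + 1)%C (1:C)). ring.
  - rewrite sum_Sn, <- IHn. reflexivity.
Qed.

Lemma H_exists z : Cmod z <= r -> exists l, Ccv (SS q z) l /\ Cmod (l - 1)%C <= Cmod z * G.
Proof.
  intro Hz.
  assert (E1 : ex_series (fun m => tt q z (S m))).
  { apply (@ex_series_le C_AbsRing C_CompleteNormedModule _ (fun m => Cmod z * gg m)).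
    - intro m. apply tt_bound. exact Hz.
    - apply (ex_series_scal_l (Cmod z) gg). apply gg_series. }
  apply ex_series_incr_1 in E1. destruct E1 as [l Hl].
  exists l. split.
  - apply Ccv_unshift. apply (Ccv_ext_ev (fun n => sum_n (tt q z) n)).
    { exists O. intros n _. symmetry. apply SS_sum. }
    now apply Ccv_of_is_series.
  - apply (Ccv_le (SS q z)).
    + apply Ccv_unshift. apply (Ccv_ext_ev (fun n => sum_n (tt q z) n)).
      { exists O. intros n _. symmetry. apply SS_sum. }
      now apply Ccv_of_is_series.
    + exists 1%nat. intros n Hn. destruct n as [|n]; [lia|]. clear Hn.
      assert (Hb : Cmod (SS q z (S n) - 1)%C <= Cmod z * sum_n gg n - Cmod z * gg n).
      { induction n.
        - simpl. rewrite sum_O. replace (0 + 1 - 1)%C with (0:C) by ring. rewrite Cmod_0. change (gg 0) with Kc. lra.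
        - change (SS q z (S (S n))) with (SS q z (S n) + tt q z (S n))%C.
          replace (SS q z (S n) + tt q z (S n) - 1)%C with ((SS q z (S n) - 1) + tt q z (S n))%C by ring.
          eapply Rle_trans; [apply Cmod_triangle|].
          rewrite sum_Sn. change (plus (sum_n gg n) (gg (S n))) with (sum_n gg n + gg (S n)).
          assert (T := tt_bound z n Hz).
          assert (0 <= Cmod z * gg (S n)) by (apply Rmult_le_pos; [apply Cmod_ge_0| left; apply gg_pos]).
          nra. }
      eapply Rle_trans; [exact Hb|].
      assert (Cmod z * sum_n gg n <= Cmod z * G) by (apply Rmult_le_compat_l; [apply Cmod_ge_0| apply gg_partial]).
      assert (0 <= Cmod z * gg n) by (apply Rmult_le_pos; [apply Cmod_ge_0| left; apply gg_pos]).
      lra.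
Qed.


Lemma tt_to0 z : Cmod z <= r -> Ccv (tt q z) (0:C).
Proof.
  intro Hz. apply Ccv_unshift. apply (Ccv_dom0 _ (fun m => Cmod z * gg m)).
  - intro m. apply tt_bound. exact Hz.
  - apply ex_series_lim_0. apply (ex_series_scal_l (Cmod z) gg). apply gg_series.
Qed.

Lemma small_lt1 (x : C) : Cmod x <= r -> Cmod x < 1.
Proof. intro H. unfold r in H. lra. Qed.

Lemma small_mul (x y : C) : Cmod x <= r -> Cmod y <= 1 -> Cmod (x * y)%C <= r.
Proof. intros Hx Hy. rewrite Cmod_mult. assert (H := Cmod_ge_0 x). nra. Qed.

Lemma CmodX1 m : Cmod ((q^2)^m)%C <= 1.
Proof. destruct (X_bound m); lra. Qed.

Lemma r_lt1 : r < 1.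
Proof. exact hq. Qed.

Lemma Cmod_q_le1 : Cmod q <= 1.
Proof. left; exact hq. Qed.

Lemma Cmod_q2_le1 : Cmod (q^2)%C <= 1.
Proof. rewrite Cmod_pow. fold r. assert (H := r_ge0). assert (H1 := r_lt1). nra. Qed.

Lemma small_z z : Cmod z <= r -> Cmod (q * z)%C <= r.
Proof. intro Hz. rewrite Cmult_comm. apply small_mul; [exact Hz| apply Cmod_q_le1]. Qed.

Lemma nzA (x : C) : Cmod x <= r -> (1 + x)%C <> (0:C).
Proof. intro H. apply nz_add, small_lt1, H. Qed.
Lemma nzS (x : C) : Cmod x <= r -> (1 - x)%C <> (0:C).
Proof. intro H. apply nz_sub, small_lt1, H. Qed.

Lemma tt_shift z N : Cmod z <= r ->
  tt q (z * q^2) N = (tt q z N * (q^2)^N * (1 + q*z) / (1 + q*z*(q^2)^N))%C.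
Proof.
  intro Hz.
  assert (Hqz := small_z z Hz).
  assert (n0 : (1 + q*z)%C <> (0:C)) by (apply nzA; exact Hqz).
  induction N.
  - simpl. field. replace (q * z * 1)%C with (q*z)%C by ring. exact n0.
  - change (tt q (z * q ^ 2) (S N)) with (tt q (z * q^2) N * rho q (z * q^2) N)%C.
    change (tt q z (S N)) with (tt q z N * rho q z N)%C.
    rewrite IHN. unfold rho. change ((q^2)^(S N))%C with (q^2 * (q^2)^N)%C.
    set (X := ((q^2)^N)%C).
    assert (HX : Cmod X <= 1) by apply CmodX1.
    assert (n1 : (1 + q*z*X)%C <> (0:C)) by (apply nzA, small_mul; assumption).
    assert (n2 : (1 - q^2*X)%C <> (0:C)).
    { apply nzS. replace (q^2*X)%C with (q*(q*X))%C by ring. rewrite Cmult_comm. apply small_mul.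
      rewrite Cmod_mult. assert (H := Cmod_ge_0 X). assert (Hr0 := r_ge0). change (Cmod q) with r. nra.
      apply Cmod_q_le1. }
    assert (n3 : (1 + q*(z*q^2)*X)%C <> (0:C)).
    { apply nzA. replace (q*(z*q^2)*X)%C with (q*z*(q^2*X))%C by ring. apply small_mul. exact Hqz.
      rewrite Cmod_mult. assert (H := Cmod_ge_0 X). assert (H1 := Cmod_q2_le1). assert (H2 := Cmod_ge_0 (q^2)%C). nra. }
    assert (n4 : (1 + q*z*(q^2*X))%C <> (0:C)).
    { apply nzA. apply small_mul. exact Hqz.
      rewrite Cmod_mult. assert (H := Cmod_ge_0 X). assert (H1 := Cmod_q2_le1). assert (H2 := Cmod_ge_0 (q^2)%C). nra. }
    field. repeat split; assumption.
Qed.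


Lemma SS_ident z N : Cmod z <= r ->
  ((1 + q*z) * SS q z N - (1 - z) * SS q (z*q^2) N = - (1 - (q^2)^N) * (1 + q*z) * tt q z N)%C.
Proof.
  intro Hz.
  assert (Hqz := small_z z Hz).
  assert (n0 : (1 + q*z)%C <> (0:C)) by (apply nzA; exact Hqz).
  induction N.
  - simpl. ring.
  - change (SS q z (S N)) with (SS q z N + tt q z N)%C.
    change (SS q (z*q^2) (S N)) with (SS q (z*q^2) N + tt q (z*q^2) N)%C.
    replace ((1 + q * z) * (SS q z N + tt q z N) - (1 - z) * (SS q (z * q ^ 2) N + tt q (z * q ^ 2) N))%C
      with (((1 + q * z) * SS q z N - (1 - z) * SS q (z * q ^ 2) N) + ((1 + q*z) * tt q z N - (1 - z) * tt q (z * q ^ 2) N))%C by ring.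
    rewrite IHN, tt_shift by exact Hz.
    change (tt q z (S N)) with (tt q z N * rho q z N)%C.
    unfold rho. change ((q^2)^(S N))%C with (q^2 * (q^2)^N)%C.
    set (X := ((q^2)^N)%C).
    assert (HX : Cmod X <= 1) by apply CmodX1.
    assert (n1 : (1 + q*z*X)%C <> (0:C)) by (apply nzA, small_mul; assumption).
    assert (n2 : (1 - q^2*X)%C <> (0:C)).
    { apply nzS. replace (q^2*X)%C with (q*(q*X))%C by ring. rewrite Cmult_comm. apply small_mul.
      rewrite Cmod_mult. assert (H := Cmod_ge_0 X). assert (Hr0 := r_ge0). change (Cmod q) with r. nra.
      apply Cmod_q_le1. }
    field. repeat split; assumption.
Qed.

Lemma func_eq z l1 l2 : Cmod z <= r -> Ccv (SS q z) l1 -> Ccv (SS q (z*q^2)) l2 ->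
  ((1 + q*z) * l1 = (1 - z) * l2)%C.
Proof.
  intros Hz H1 H2.
  assert (A : Ccv (fun N => (1 + q*z) * SS q z N - (1 - z) * SS q (z*q^2) N)%C ((1 + q*z) * l1 - (1 - z) * l2)%C).
  { apply (Ccv_plus (fun N => (1 + q*z) * SS q z N)%C (fun N => - ((1 - z) * SS q (z*q^2) N))%C).
    apply Ccv_scal, H1.
    apply (Ccv_ext_ev (fun N => (- (1 - z)) * SS q (z*q^2) N)%C). exists O. intros; ring.
    replace (- ((1 - z) * l2))%C with (- (1 - z) * l2)%C by ring. apply Ccv_scal, H2. }
  assert (B : Ccv (fun N => (1 + q*z) * SS q z N - (1 - z) * SS q (z*q^2) N)%C (0:C)).
  { apply (Ccv_domC _ (tt q z) 4). lra.
    - intro N. rewrite SS_ident by exact Hz. rewrite !Cmod_mult.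
      assert (E1 : Cmod (- (1 - (q^2)^N))%C <= 2).
      { rewrite Cmod_opp. eapply Rle_trans; [apply Cmod_triangle|]. rewrite Cmod_1, Cmod_opp.
        assert (H := CmodX1 N). lra. }
      assert (E2 : Cmod (1 + q*z)%C <= 2).
      { eapply Rle_trans; [apply Cmod_triangle|]. rewrite Cmod_1.
        assert (H := small_lt1 _ (small_z z Hz)). lra. }
      assert (H0 := Cmod_ge_0 (tt q z N)).
      apply Rmult_le_compat_r; [exact H0|].
      replace 4 with (2*2) by ring. apply Rmult_le_compat; try apply Cmod_ge_0; assumption.
    - apply tt_to0, Hz. }
  assert (E := Ccv_unique _ _ _ A B).
  replace ((1 + q*z) * l1)%C with (((1 + q * z) * l1 - (1 - z) * l2) + (1 - z) * l2)%C by ring.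
  rewrite E. ring.
Qed.


Definition zk (n : nat) : C := (q * (q^2)^n)%C.
Fixpoint Rp (n : nat) : C := match n with O => (1:C) | S n => (Rp n * (1 - zk n) / (1 + q * zk n))%C end.

Lemma zk_small n : Cmod (zk n) <= r.
Proof. unfold zk. apply small_mul. right; reflexivity. apply CmodX1. Qed.
Lemma zk_S n : zk (S n) = (zk n * q^2)%C.
Proof. unfold zk. change ((q^2)^(S n))%C with (q^2 * (q^2)^n)%C. ring. Qed.
Lemma zk_0 : zk O = q.
Proof. unfold zk. simpl. ring. Qed.

Lemma Cinv_nz (x : C) : x <> (0:C) -> (/ x)%C <> (0:C).
Proof. intros H E. assert (T := Cinv_r x H). rewrite E in T. replace (x * 0)%C with (0:C) in T by ring.
  apply (f_equal fst) in T. simpl in T. lra. Qed.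

Lemma Rp_nz n : Rp n <> (0:C).
Proof.
  induction n.
  - simpl. intro E. apply (f_equal fst) in E. simpl in E. lra.
  - simpl. unfold Cdiv. apply Cmult_neq_0. apply Cmult_neq_0. exact IHn.
    apply nzS, zk_small. apply Cinv_nz. apply nzA, small_z, zk_small.
Qed.

Lemma iterate (L0 : C) : Ccv (SS q q) L0 -> forall n, exists l : C, Ccv (SS q (zk n)) l /\ L0 = (Rp n * l)%C /\ Cmod (l - 1)%C <= Cmod (zk n) * G.
Proof.
  intros HL n. induction n.
  - exists L0. rewrite zk_0. split; [exact HL|]. split; [simpl; ring|].
    destruct (H_exists q (Rle_refl _)) as [l [Hl Hb]].
    rewrite (Ccv_unique _ _ _ HL Hl). exact Hb.
  - destruct IHn as [l [Hl [E _]]].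
    destruct (H_exists (zk (S n)) (zk_small (S n))) as [l' [Hl' Hb']].
    exists l'. split; [exact Hl'|]. split; [|exact Hb'].
    rewrite zk_S in Hl'.
    assert (F := func_eq (zk n) l l' (zk_small n) Hl Hl').
    assert (n1 : (1 + q * zk n)%C <> (0:C)) by (apply nzA, small_z, zk_small).
    rewrite E. simpl.
    replace l with ((1 - zk n) * l' / (1 + q * zk n))%C.
    + field. exact n1.
    + rewrite <- F. field. exact n1.
Qed.

Lemma G_nonneg : 0 <= G.
Proof. assert (H := gg_partial O). rewrite sum_O in H. assert (H' := gg_pos O). lra. Qed.

Lemma ratio_to1 (L0 : C) : Ccv (SS q q) L0 -> Ccv (fun n => L0 / Rp n)%C (1:C).
Proof.
  intro HL. assert (It := iterate L0 HL).
  assert (A : Ccv (fun n => L0 / Rp n - 1)%C (0:C)).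
  { apply (Ccv_dom0 _ (fun n => G * r * (r^2)^n)).
    - intro n. destruct (It n) as [l [_ [E Hb]]].
      replace (L0 / Rp n)%C with l by (rewrite E; field; apply Rp_nz).
      eapply Rle_trans; [exact Hb|]. unfold zk. rewrite Cmod_mult, CmodX. fold r.
      assert (H := G_nonneg). right; ring.
    - replace (Finite 0) with (Rbar_mult (G * r) 0) by (simpl; f_equal; ring).
      apply is_lim_seq_scal_l. apply is_lim_seq_geom. assert (H1 := r_lt1). assert (H0 := r_ge0).
      rewrite Rabs_pos_eq; nra. }
  assert (B := Ccv_plus _ _ _ _ A (Ccv_const 1)).
  replace (0 + 1)%C with (1:C) in B by ring.
  apply (Ccv_ext_ev (fun n => (L0 / Rp n - 1) + 1)%C). { exists O. intros; ring. }
  exact B.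
Qed.

Lemma main_limit (L0 P : C) : Ccv (SS q q) L0 -> Ccv Rp P -> L0 = P.
Proof.
  intros HL HP. assert (M := Ccv_mult _ _ _ _ HP (ratio_to1 L0 HL)).
  assert (C0' : Ccv (fun n => Rp n * (L0 / Rp n))%C L0).
  { apply (Ccv_ext_ev (fun _ => L0)). exists O. intros n _. field. apply Rp_nz. apply Ccv_const. }
  rewrite (Ccv_unique _ _ _ C0' M). ring.
Qed.

Lemma L0_exists : exists L0, Ccv (SS q q) L0.
Proof. destruct (H_exists q (Rle_refl _)) as [l [H _]]. now exists l. Qed.

End Core.

Lemma Cpow_eq (z : C) n : Defs.Cpow z n = (z ^ n)%C.
Proof. induction n; simpl; [reflexivity| rewrite IHn; reflexivity]. Qed.
Lemma qpoch_S (a p : C) m : qpoch a p (S m) = (qpoch a p m * (1 - a * p^m))%C.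
Proof. simpl. rewrite Cpow_eq. reflexivity. Qed.
Lemma qpoch_0 (a p : C) : qpoch a p O = (1:C).
Proof. reflexivity. Qed.
Lemma Cmul_eq (a b : C) : Cmul a b = (a * b)%C. Proof. reflexivity. Qed.
Lemma Cadd_eq (a b : C) : Cadd a b = (a + b)%C. Proof. reflexivity. Qed.
Lemma Copp_eq (a : C) : Defs.Copp a = (- a)%C. Proof. reflexivity. Qed.
Lemma Cdiv_eq (a b : C) : Defs.Cdiv a b = (a / b)%C. Proof. reflexivity. Qed.
Lemma C1_eq : C1 = (1:C). Proof. reflexivity. Qed.

Section Prods.
Variable q : C.
Hypothesis hq : Cmod q < 1.
Let r := Cmod q.

Lemma r0 : 0 <= r. Proof. apply Cmod_ge_0. Qed.
Lemma r1 : r < 1. Proof. exact hq. Qed.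

Lemma P1_conv : exists P1 : C, Ccv (qpoch q q) P1.
Proof.
  destruct (ProdConv (qpoch q q) (fun k => - (q * q^k))%C 1 r) as [L HL].
  - lra.
  - split; [apply r0| apply r1].
  - intro k. rewrite Cmod_opp, Cmod_mult, Cmod_pow. fold r. assert (H0 := r0). assert (H1 := r1).
    assert (0 <= r^k) by (apply pow_le; lra). nra.
  - intro k. rewrite qpoch_S. ring.
  - now exists L.
Qed.

Let q4 := (q^4)%C.
Lemma r4 : Cmod q4 = r^4. Proof. unfold q4. rewrite Cmod_pow. reflexivity. Qed.
Lemma r4b : 0 <= r^4 < 1.
Proof. assert (H0 := r0). assert (H1 := r1). split. apply pow_le; lra.
  assert (r*r < 1) by nra. assert (0 <= r*r) by nra. replace (r^4) with ((r*r)*(r*r)) by ring. nra. Qed.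

Lemma w_bound k : Cmod (q4 * q4^k)%C <= r^4 * (r^4)^k /\ r^4 * (r^4)^k <= (r^4)^k /\ r^4 * (r^4)^k <= r^4.
Proof.
  rewrite Cmod_mult, Cmod_pow, r4. destruct r4b. assert (0 <= (r^4)^k) by (apply pow_le; lra).
  assert ((r^4)^k <= 1) by (apply powle1; lra). split; [lra|]. split; nra.
Qed.

Lemma P2_conv : exists P2 : C, Ccv (qpoch q4 q4) P2.
Proof.
  destruct (ProdConv (qpoch q4 q4) (fun k => - (q4 * q4^k))%C 1 (r^4)) as [L HL].
  - lra.
  - apply r4b.
  - intro k. rewrite Cmod_opp. destruct (w_bound k) as [A [B _]]. lra.
  - intro k. rewrite qpoch_S. ring.
  - now exists L.
Qed.

Fixpoint Qr (n : nat) : C := match n with O => (1:C) | S n => (Qr n / (1 - q4 * q4^n))%C end.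

Lemma w_nz k : (1 - q4 * q4^k)%C <> (0:C).
Proof. apply nz_sub. destruct (w_bound k) as [A [_ B]]. destruct r4b. lra. Qed.

Lemma Q_conv : exists Q : C, Ccv Qr Q.
Proof.
  destruct (ProdConv Qr (fun k => (q4 * q4^k) / (1 - q4 * q4^k))%C (/ (1 - r^4)) (r^4)) as [L HL].
  - destruct r4b. left. apply Rinv_0_lt_compat. lra.
  - apply r4b.
  - intro k. destruct (w_bound k) as [A [B D]]. destruct r4b.
    rewrite Cmod_div by apply w_nz.
    assert (L1 : 1 - r^4 <= Cmod (1 - q4 * q4^k)%C) by (apply Cmod_lb_sub; lra).
    assert (0 <= Cmod (q4 * q4^k)%C) by apply Cmod_ge_0.
    unfold Rdiv. rewrite Rmult_comm.
    apply Rmult_le_compat; try lra. left; apply Rinv_0_lt_compat; lra.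
    apply Rinv_le_contravar; lra.
  - intro k. simpl. assert (H := w_nz k). field. exact H.
  - now exists L.
Qed.

Lemma P4Q n : (qpoch q4 q4 n * Qr n)%C = (1:C).
Proof.
  induction n. rewrite qpoch_0. simpl. ring.
  rewrite qpoch_S. simpl. assert (H := w_nz n).
  replace (qpoch q4 q4 n * (1 - q4 * q4 ^ n) * (Qr n / (1 - q4 * q4 ^ n)))%C with (qpoch q4 q4 n * Qr n)%C.
  exact IHn. field. exact H.
Qed.

Lemma poch_even n : @eq C (qpoch q q (2 * n)) (Rp q n * qpoch q4 q4 n)%C.
Proof.
  induction n.
  - change (2*0)%nat with O. rewrite !qpoch_0. simpl. ring.
  - replace (2 * S n)%nat with (S (S (2 * n))) by lia.
    rewrite !qpoch_S, IHn. simpl (Rp q (S n)). unfold zk.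
    rewrite (Cpow_S q (2*n)), (Cpow_mult_r q 2 n).
    unfold q4. replace (q^4)%C with (q^2 * q^2)%C by ring. rewrite Cpow_mult_l.
    set (X := ((q^2)^n)%C).
    assert (HX : Cmod X <= 1). { unfold X. rewrite !Cmod_pow. fold r. assert (H0 := r0). assert (H1 := r1).
      apply powle1. split; nra. }
    assert (n1 : (1 + q * (q * X))%C <> (0:C)).
    { apply nz_add. rewrite !Cmod_mult. fold r. assert (H0 := r0). assert (H1 := r1).
      assert (0 <= Cmod X) by apply Cmod_ge_0. nra. }
    field. exact n1.
Qed.

End Prods.

Section Fin.
Variable q : C.
Hypothesis hq : Cmod q < 1.

Lemma qpoch_nz (a p : C) m : Cmod a < 1 -> Cmod p <= 1 -> @eq C (qpoch a p m) (0:C) -> False.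
Proof.
  intros Ha Hp. induction m.
  - rewrite qpoch_0. intro E. apply (f_equal fst) in E. simpl in E. lra.
  - rewrite qpoch_S. apply Cmult_neq_0. exact IHm. apply nz_sub.
    rewrite Cmod_mult, Cmod_pow. assert (0 <= Cmod p) by apply Cmod_ge_0.
    assert (Cmod p ^ m <= 1) by (apply powle1; lra). assert (0 <= Cmod p ^ m) by (apply pow_le; lra).
    assert (0 <= Cmod a) by apply Cmod_ge_0. nra.
Qed.

Definition am (m : nat) : C := (q ^ (m*m) * qpoch (-q)%C (q^2)%C m / qpoch (q^4)%C (q^4)%C m)%C.

Lemma Cmod_q2 : Cmod (q^2)%C <= 1.
Proof. rewrite Cmod_pow. assert (0 <= Cmod q) by apply Cmod_ge_0. nra. Qed.
Lemma Cmod_q4 : Cmod (q^4)%C < 1.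
Proof. rewrite Cmod_pow. assert (0 <= Cmod q) by apply Cmod_ge_0.
  assert (Cmod q * Cmod q < 1) by nra. replace (Cmod q ^ 4) with ((Cmod q * Cmod q) * (Cmod q * Cmod q)) by ring. nra. Qed.

Lemma X_small m : Cmod ((q^2)^m)%C <= 1.
Proof. rewrite Cmod_pow. apply powle1. split. apply Cmod_ge_0. apply Cmod_q2. Qed.

Lemma nzq2X m : (1 - q^2 * (q^2)^m)%C <> (0:C) /\ (1 + q^2 * (q^2)^m)%C <> (0:C).
Proof.
  assert (Cmod (q^2 * (q^2)^m)%C < 1).
  { rewrite Cmod_mult. assert (A := X_small m). assert (B := Cmod_ge_0 ((q^2)^m)%C).
    assert (Cmod (q^2)%C < 1). { rewrite Cmod_pow. assert (0 <= Cmod q) by apply Cmod_ge_0. nra. }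
    assert (0 <= Cmod (q^2)%C) by apply Cmod_ge_0. nra. }
  split. apply nz_sub; lra. apply nz_add; lra.
Qed.

Lemma am_S m : am (S m) = (am m * (q * (q^2)^m) * (1 + q*(q^2)^m) / (1 - q^2*(q^2)^m) / (1 + q^2*(q^2)^m))%C.
Proof.
  unfold am. rewrite !qpoch_S.
  assert (P := qpoch_nz (q^4)%C (q^4)%C m Cmod_q4 (Rlt_le _ _ Cmod_q4)).
  replace (S m * S m)%nat with (m*m + S (2*m))%nat by lia.
  rewrite Cpow_add_r, Cpow_S, (Cpow_mult_r q 2 m).
  replace ((q^4)^m)%C with ((q^2)^m * (q^2)^m)%C by (rewrite <- Cpow_mult_l; f_equal; ring).
  destruct (nzq2X m) as [n1 n2].
  set (X := ((q^2)^m)%C).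
  generalize (qpoch (- q)%C (q^2)%C m) P. generalize (qpoch (q^4)%C (q^4)%C m). intros P4 P1 HP.
  assert (P4 <> (0:C)) by exact HP.
  field. repeat split; try assumption.
  replace (1 - q^4 * (X * X))%C with ((1 - q^2 * X) * (1 + q^2*X))%C by ring.
  apply Cmult_neq_0; assumption.
Qed.

Fixpoint sg (m : nat) : C := match m with O => (1:C) | S m => (- sg m)%C end.

Lemma tt_am m : tt q q m = (sg m * am m)%C.
Proof.
  induction m.
  - simpl. unfold am. rewrite !qpoch_0. simpl. field.
  - simpl (tt q q (S m)). simpl (sg (S m)). rewrite IHm, am_S. unfold rho.
    destruct (nzq2X m) as [n1 n2].
    replace (q * q * (q^2)^m)%C with (q^2 * (q^2)^m)%C by ring.
    field. repeat split; assumption.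
Qed.

Lemma sg_even k : sg (2 * k) = (1:C).
Proof. induction k. reflexivity. replace (2 * S k)%nat with (S (S (2*k))) by lia. change (sg (S (S (2*k)))) with (- - sg (2*k))%C. rewrite IHk. ring. Qed.


Lemma term8_am N : @eq C (term8 q (S N)) (- am (S (2*N)) + am (S (S (2*N))))%C.
Proof.
  unfold term8.
  change Defs.Cpow with Complex.Cpow. change Defs.Cmul with Complex.Cmult.
  change Defs.Cadd with Complex.Cplus. change Defs.Copp with Complex.Copp.
  change Defs.Cdiv with Complex.Cdiv. change C1 with (1:C).
  replace (2 * S N - 1)%nat with (S (2*N)) by lia.
  replace (4 * S N - 1)%nat with (S (2 * S (2*N))) by lia.
  replace (8 * S N - 2)%nat with (2 * S (2 * S (2*N)))%nat by lia.
  replace (8 * S N)%nat with (2 * S (S (2 * S (2*N))))%nat by lia.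
  replace (2 * S N)%nat with (S (S (2*N))) by lia.
  rewrite Nat.pow_2_r.
  rewrite (am_S (S (2*N))).
  set (m := S (2*N)).
  rewrite qpoch_S.
  rewrite (Cpow_mult_r q 2 (S (S (2*m)))), (Cpow_mult_r q 2 (S (2*m))), (Cpow_S q (2*m)), (Cpow_mult_r q 2 m).
  replace ((q^2)^(S (S (2*m))))%C with (q^2 * q^2 * ((q^2)^m * (q^2)^m))%C.
  2:{ rewrite !Cpow_S. replace (2*m)%nat with (m+m)%nat by lia. rewrite Cpow_add_r. ring. }
  replace ((q^2)^(S (2*m)))%C with (q^2 * ((q^2)^m * (q^2)^m))%C.
  2:{ rewrite !Cpow_S. replace (2*m)%nat with (m+m)%nat by lia. rewrite Cpow_add_r. ring. }
  replace ((q^4)^m)%C with ((q^2)^m * (q^2)^m)%C by (rewrite <- Cpow_mult_l; f_equal; ring).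
  destruct (nzq2X m) as [n1 n2].
  unfold am.
  assert (P := qpoch_nz (q^4)%C (q^4)%C m Cmod_q4 (Rlt_le _ _ Cmod_q4)).
  set (X := ((q^2)^m)%C).
  generalize (qpoch (- q)%C (q^2)%C m) P. generalize (qpoch (q^4)%C (q^4)%C m). intros P4 P1 HP.
  assert (P4 <> (0:C)) by exact HP.
  field. repeat split; try assumption.
  replace (1 - q^4 * (X * X))%C with ((1 - q^2 * X) * (1 + q^2*X))%C by ring.
  apply Cmult_neq_0; assumption.
Qed.

End Fin.

Lemma psum8_SS (q : C) (hq : Cmod q < 1) N : @eq C (psum8 q N) (SS q q (S (2*N))).
Proof.
  induction N.
  - simpl. change C1 with (1:C). ring.
  - change (psum8 q (S N)) with (Cadd (psum8 q N) (term8 q (S N))).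
    change Defs.Cadd with Complex.Cplus. rewrite IHN, term8_am by exact hq.
    replace (2 * S N)%nat with (S (S (2*N))) by lia.
    change (SS q q (S (S (S (2*N))))) with (SS q q (S (2*N)) + tt q q (S (2*N)) + tt q q (S (S (2*N))))%C.
    rewrite !tt_am by exact hq.
    change (sg (S (S (2*N)))) with (- - sg (2*N))%C. change (sg (S (2*N))) with (- sg (2*N))%C.
    rewrite sg_even. ring.
Qed.

Theorem mainTheorem8 (q : Cpx) (hq : Cnorm q < 1) :
  exists S P1 P2 : Cpx,
    Ccv (psum8 q) S /\
    qpoch_inf q q P1 /\
    qpoch_inf (Cpow q 4) (Cpow q 4) P2 /\
    P2 <> C0 /\
    S = Cdiv P1 P2.
Proof.
  change (Cmod q < 1) in hq.
  destruct (L0_exists q hq) as [L0 HL0].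
  destruct (P1_conv q hq) as [P1 H1].
  destruct (P2_conv q hq) as [P2 H2].
  destruct (Q_conv q hq) as [Q HQ].
  assert (HR : Ccv (Rp q) (P1 * Q)%C).
  { apply (Ccv_ext_ev (fun n => qpoch q q (2*n) * Qr q n)%C).
    { exists O. intros n _. rewrite (poch_even q hq n). rewrite <- Cmult_assoc, (P4Q q hq n). ring. }
    apply Ccv_mult. apply (Ccv_subseq (qpoch q q) P1 (fun n => 2*n)%nat). intro; lia. exact H1. exact HQ. }
  assert (EL := main_limit q hq L0 (P1 * Q)%C HL0 HR).
  assert (EQ : (P2 * Q)%C = (1:C)).
  { assert (M := Ccv_mult _ _ _ _ H2 HQ).
    assert (K : Ccv (fun n => qpoch (q^4)%C (q^4)%C n * Qr q n)%C (1:C)).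
    { apply (Ccv_ext_ev (fun _ => (1:C))). exists O. intros n _. symmetry. apply P4Q. exact hq. apply Ccv_const. }
    exact (Ccv_unique _ _ _ M K). }
  assert (NZ : P2 <> (0:C)).
  { intro E. rewrite E in EQ. replace (0 * Q)%C with (0:C) in EQ by ring.
    apply (f_equal fst) in EQ. simpl in EQ. lra. }
  exists L0, P1, P2. split; [|split; [|split; [|split]]].
  - apply (Ccv_ext_ev (fun N => SS q q (S (2*N)))).
    { exists O. intros N _. symmetry. apply psum8_SS. exact hq. }
    apply (Ccv_subseq (SS q q) L0 (fun N => S (2*N))). intro; lia. exact HL0.
  - exact H1.
  - change Defs.Cpow with Complex.Cpow. exact H2.
  - exact NZ.
  - change (@eq C L0 (P1 / P2)%C). rewrite EL.
    replace Q with (/ P2)%C. reflexivity.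
    replace Q with (/ P2 * (P2 * Q))%C. rewrite EQ. ring. field. exact NZ.
Qed.
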